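(* For any $U\in(0,1]$, if $f(U)\le\frac{25C}{(\lambda^* )^2}+\frac{g(\lambda^* )}{\epsilon^2}$, then with $L=\sqrt{\frac{C}{C/U^2+(g(U)-1)/\epsilon^2}}$ we have $f(\lambda)\le50f(\lambda^* )$ for every $\lambda\in[L,U]$.
   Context: $\epsilon\in(0,1)$, $K\ge1$, $C>K$, $g:[0,1]\to[1,K]$ non-decreasing, $f(\lambda)=\frac{C}{\lambda^2}+\frac{g(\lambda)}{\epsilon^2}$, and $\lambda^*\in(0,1]$ a minimizer of $f$ over $[0,1]$. *)

(* Defs.v *)
From Stdlib Require Import Reals Lra.
Open Scope R_scope.

Definition fobj (C eps : R) (g : R -> R) (lam : R) : R :=
  C / lam ^ 2 + g lam / eps ^ 2.

(* Main.v *)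
Require Import Defs.
From Stdlib Require Import Reals Lra.
Open Scope R_scope.

Theorem lemmaB6 (eps K C : R) (g : R -> R) (lamstar U : R)
  (heps : 0 < eps < 1) (hK : 1 <= K) (hC : K < C)
  (hg_range : forall x, 0 <= x <= 1 -> 1 <= g x <= K)
  (hg_mono : forall x y, 0 <= x -> x <= y -> y <= 1 -> g x <= g y)
  (hlam : 0 < lamstar <= 1)
  (hmin : forall lam, 0 < lam <= 1 -> fobj C eps g lamstar <= fobj C eps g lam)
  (hU : 0 < U <= 1)
  (hfU : fobj C eps g U <= 25 * C / lamstar ^ 2 + g lamstar / eps ^ 2) :
  let L := sqrt (C / (C / U ^ 2 + (g U - 1) / eps ^ 2)) in
  forall lam, L <= lam <= U -> fobj C eps g lam <= 50 * fobj C eps g lamstar.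
Proof.
  intros L lam [HL HlU].
  unfold fobj in *.
  assert (He2 : 0 < eps ^ 2) by (apply pow_lt; lra).
  assert (HU2 : 0 < U ^ 2) by (apply pow_lt; lra).
  assert (Hs2 : 0 < lamstar ^ 2) by (apply pow_lt; lra).
  assert (HgU := hg_range U ltac:(lra)).
  assert (Hgs := hg_range lamstar ltac:(lra)).
  set (D := C / U ^ 2 + (g U - 1) / eps ^ 2) in *.
  assert (HCU : 0 < C / U ^ 2) by (apply Rdiv_lt_0_compat; lra).
  assert (Hg1 : 0 <= (g U - 1) / eps ^ 2) by (unfold Rdiv; apply Rmult_le_pos; [lra | left; apply Rinv_0_lt_compat; lra]).
  assert (HD : 0 < D) by (unfold D; lra).
  assert (HCD : 0 < C / D) by (apply Rdiv_lt_0_compat; lra).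
  assert (HL0 : 0 < L) by (apply sqrt_lt_R0; exact HCD).
  assert (Hlam0 : 0 < lam) by lra.
  assert (HL2 : L ^ 2 = C / D) by (unfold L; simpl; rewrite Rmult_1_r; apply sqrt_sqrt; lra).
  assert (Hl2 : C / D <= lam ^ 2) by (rewrite <- HL2; apply pow_incr; lra).
  assert (Hl2p : 0 < lam ^ 2) by (apply pow_lt; lra).
  assert (H1 : C / lam ^ 2 <= D).
  { apply (Rmult_le_reg_r (lam ^ 2)); [lra|].
    unfold Rdiv; rewrite Rmult_assoc, Rinv_l by lra.
    apply (Rmult_le_reg_r (/ D)); [apply Rinv_0_lt_compat; lra|].
    rewrite Rmult_1_r. replace (D * lam ^ 2 * / D) with (lam ^ 2) by (field; lra).
    exact Hl2. }
  assert (Hgl : g lam <= g U) by (apply hg_mono; lra).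
  assert (H2 : g lam / eps ^ 2 <= g U / eps ^ 2).
  { unfold Rdiv; apply Rmult_le_compat_r; [left; apply Rinv_0_lt_compat; lra| lra]. }
  assert (H3 : (g U - 1) / eps ^ 2 <= g U / eps ^ 2).
  { unfold Rdiv; apply Rmult_le_compat_r; [left; apply Rinv_0_lt_compat; lra| lra]. }
  assert (H4 : 0 <= g lamstar / eps ^ 2) by (unfold Rdiv; apply Rmult_le_pos; [lra | left; apply Rinv_0_lt_compat; lra]).
  assert (H5 : 0 <= g U / eps ^ 2) by (unfold Rdiv; apply Rmult_le_pos; [lra | left; apply Rinv_0_lt_compat; lra]).
  assert (H6 : 25 * C / lamstar ^ 2 = 25 * (C / lamstar ^ 2)) by (field; lra).
  unfold D in *. lra.
Qed.
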